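(* Let $\mathcal{H}$ and $\mathcal{K}$ be finite-dimensional complex Hilbert spaces and let $\Psi,\Xi: B(\mathcal{H})\to B(\mathcal{K})$ be Hermitian-preserving trace-preserving linear maps. Suppose there are finite, pairwise disjoint index sets $K,J,\mathcal{I},L$ with $|K|=|L|=|\mathcal{I}|=|J|$ and linear operators $A_k,B_j,C_i,D_l:\mathcal{H}\to\mathcal{K}$ ($k\in K$, $j\in J$, $i\in\mathcal{I}$, $l\in L$) such that for all $X\in B(\mathcal{H})$ $$\Psi(X)=\sum_{k\in K}A_kXA_k^\dagger-\sum_{j\in J}B_jXB_j^\dagger,\qquad \Xi(X)=\sum_{i\in\mathcal{I}}C_iXC_i^\dagger-\sum_{l\in L}D_lXD_l^\dagger.$$ Then $\Psi=\Xi$ if and only if there exists a unitary matrix $U$ with rows indexed by $K\cup L$ and columns indexed by $\mathcal{I}\cup J$ such that $$A_k=\sum_{i\in\mathcal{I}}U(k,i)C_i+\sum_{j\in J}U(k,j)B_j\ \ (k\in K),\qquad D_l=\sum_{i\in\mathcal{I}}U(l,i)C_i+\sum_{j\in J}U(l,j)B_j\ \ (l\in L).$$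
   Context: $B(\mathcal{H})$ denotes all linear operators on $\mathcal{H}$. A map is Hermitian-preserving if $\Psi(X^\dagger)=\Psi(X)^\dagger$ and trace-preserving if $\operatorname{Tr}\Psi(X)=\operatorname{Tr}X$. *)

(* Defs.v *)
From HB Require Import structures.
From mathcomp Require Import all_boot all_order all_algebra.
From mathcomp Require Import reals complex.
Set Implicit Arguments. Unset Strict Implicit. Unset Printing Implicit Defensive.
Import Order.TTheory GRing.Theory Num.Theory.
Local Open Scope ring_scope.

Definition adjmx (C : numClosedFieldType) (m n : nat) (A : 'M[C]_(m, n)) : 'M[C]_(n, m) :=
  (map_mx Num.conj A)^T.

Definition hermitian_preserving (C : numClosedFieldType) (m n : nat)
  (Psi : 'M[C]_m -> 'M[C]_n) : Prop :=
  forall X : 'M[C]_m, Psi (adjmx X) = adjmx (Psi X).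

Definition trace_preserving (C : numClosedFieldType) (m n : nat)
  (Psi : 'M[C]_m -> 'M[C]_n) : Prop :=
  forall X : 'M[C]_m, \tr (Psi X) = \tr X.

Definition unitary_mx (C : numClosedFieldType) (p : nat) (U : 'M[C]_p) : Prop :=
  U *m adjmx U = 1%:M /\ adjmx U *m U = 1%:M.

(* Main.v *)
Require Import Defs.
From HB Require Import structures.
From mathcomp Require Import all_boot all_order all_algebra.
From mathcomp Require Import reals complex.
From mathcomp Require Import sesquilinear spectral.
From Stdlib Require Import FunctionalExtensionality.
Set Implicit Arguments. Unset Strict Implicit. Unset Printing Implicit Defensive.
Import Order.TTheory GRing.Theory Num.Theory Num.Def.
Local Open Scope ring_scope.
Local Open Scope sesquilinear_scope.

Section Gen.
Variable C : numClosedFieldType.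

Lemma adjE m n (A : 'M[C]_(m, n)) : adjmx A = A^t*.
Proof. by rewrite /adjmx map_trmx. Qed.

Lemma adj_lin s m n (k : 'I_s -> C) (M : 'I_s -> 'M[C]_(m, n)) :
  (\sum_c k c *: M c)^t* = \sum_c (k c)^* *: (M c)^t*.
Proof.
apply/matrixP => i j; rewrite !(mxE, summxE) rmorph_sum.
by apply: eq_bigr => c _; rewrite !mxE rmorphM.
Qed.

Lemma cp_sum s n m (E F : 'I_s -> 'M[C]_(n, m)) (U : 'M[C]_s) :
  U^t* *m U = 1%:M -> (forall a, E a = \sum_b U a b *: F b) ->
  forall X, \sum_a E a *m X *m (E a)^t* = \sum_b F b *m X *m (F b)^t*.
Proof.
move=> UU EF X.
transitivity (\sum_a \sum_b \sum_c (U a b * (U a c)^*) *: (F b *m X *m (F c)^t*)).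
  apply: eq_bigr => a _; rewrite EF adj_lin mulmx_suml mulmx_suml.
  apply: eq_bigr => b _; rewrite mulmx_sumr; apply: eq_bigr => c _.
  by rewrite -!scalemxAl -scalemxAr scalerA.
rewrite exchange_big /=; apply: eq_bigr => b _.
rewrite exchange_big /=.
rewrite (bigD1 b) //= [X in _ + X]big1 ?addr0.
  rewrite -scaler_suml.
  have -> : \sum_a U a b * (U a b)^* = 1.
    have := congr1 (fun M : 'M_s => M b b) UU; rewrite !mxE eqxx mulr1n => <-.
    by apply: eq_bigr => a _; rewrite !mxE mulrC.
  by rewrite scale1r.
move=> c cb; rewrite -scaler_suml.
have -> : \sum_a U a b * (U a c)^* = 0.
  have := congr1 (fun M : 'M_s => M c b) UU; rewrite !mxE (negbTE cb) mulr0n => E0; rewrite -[RHS]E0.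
  by apply: eq_bigr => a _; rewrite !mxE mulrC.
by rewrite scale0r.
Qed.

Lemma delta_entry n p m (M : 'M[C]_(n, p)) (N : 'M[C]_(p, m)) x y i j :
  (M *m delta_mx x y *m N) i j = M i x * N y j.
Proof.
rewrite -(mul_delta_mx (0 : 'I_1)) mulmxA -colE -mulmxA -rowE.
by rewrite !mxE big_ord1 !mxE.
Qed.

Lemma zmod_eq (V : zmodType) (a b c d : V) : a - b = c - d <-> a + d = c + b.
Proof.
split=> H.
  by rewrite -(subrK b a) H addrAC subrK.
by rewrite -(addrK d a) H addrAC addrK.
Qed.

Local Notation "B ^!" :=
  (orthomx conjC (mx_of_hermitian (hermitian1mx _)) B) : matrix_set_scope.
Local Notation "A '_|_ B" := (A%MS <= B^!)%MS : bool_scope.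

Lemma mmt_eq0 p r (M : 'M[C]_(p, r)) : M *m M^t* = 0 -> M = 0.
Proof.
move=> H; apply/matrixP => i j; rewrite mxE.
have := congr1 (fun A : 'M_p => A i i) H; rewrite !mxE => /eqP.
rewrite psumr_eq0; last by move=> k _; rewrite !mxE mul_conjC_ge0.
move=> /allP /(_ j (mem_index_enum _)) /implyP /(_ isT).
by rewrite !mxE mul_conjC_eq0 => /eqP.
Qed.

Lemma ker_gram p r (X Y : 'M[C]_(p, r)) : X *m X^t* = Y *m Y^t* ->
  forall q (d : 'M_(q, p)), d *m Y = 0 -> d *m X = 0.
Proof.
move=> H q d dY; apply: mmt_eq0.
rewrite trmx_mul map_mxM mulmxA -[d *m X *m _]mulmxA H.
by rewrite mulmxA dY !mul0mx.
Qed.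

Lemma pinv_gram p r (X Y : 'M[C]_(p, r)) : X *m X^t* = Y *m Y^t* ->
  Y *m (pinvmx Y *m X) = X.
Proof.
move=> H; apply/eqP; rewrite -subr_eq0 mulmxA -{2}[X]mul1mx -mulmxBl.
apply/eqP; apply: (ker_gram H).
by rewrite mulmxBl mulmxKpV // mul1mx subrr.
Qed.

Lemma rank_gram p r (X Y : 'M[C]_(p, r)) : X *m X^t* = Y *m Y^t* ->
  \rank X = \rank Y.
Proof.
move=> H; apply/eqP; rewrite eqn_leq.
rewrite -{1}(pinv_gram H) mxrankM_maxl.
by rewrite -{1}(pinv_gram (esym H)) mxrankM_maxl.
Qed.

Lemma exists_obasis q r (A : 'M[C]_(q, r)) d : \rank A^! = d ->
  exists b : 'M[C]_(d, r), b \is unitarymx /\ (b <= A^!)%MS.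
Proof.
move=> <-; exists (schmidt (row_base A^!%MS)); split.
  by apply: schmidt_unitarymx; rewrite rank_leq_col.
by rewrite eqmx_schmidt_free ?row_base_free // eq_row_base.
Qed.

Lemma col_unitary k1 k2 r (a : 'M[C]_(k1, r)) (b : 'M[C]_(k2, r)) :
  a \is unitarymx -> b \is unitarymx -> a *m b^t* = 0 ->
  col_mx a b \is unitarymx.
Proof.
move=> /unitarymxP au /unitarymxP bu ab; apply/unitarymxP.
rewrite tr_col_mx map_row_mx mul_col_row au bu ab.
have -> : b *m a^t* = 0.
  by rewrite -[b]trmxCK -map_mxM -trmx_mul ab trmx0 map_mx0.
by rewrite -scalar_mx_block.
Qed.

Lemma gram_mul q p r (c : 'M[C]_(q, p)) (X : 'M[C]_(p, r)) :
  (c *m X) *m (c *m X)^t* = c *m (X *m X^t*) *m c^t*.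
Proof. by rewrite trmx_mul map_mxM !mulmxA. Qed.

Lemma key p r (X Y : 'M[C]_(p, r)) : X *m X^t* = Y *m Y^t* ->
  exists V : 'M[C]_r, V \is unitarymx /\ X = Y *m V.
Proof.
move=> H.
set e := schmidt (row_base Y).
set bY := schmidt (row_base Y^!%MS).
have EU : schmidt_complete Y \is unitarymx by apply: schmidt_complete_unitarymx.
have eY : (e :=: Y)%MS by exact: eqmx_trans (eqmx_schmidt_free (row_base_free Y)) (eq_row_base Y).
have bYY : (bY <= Y^!)%MS by rewrite /bY eqmx_schmidt_free ?row_base_free // eq_row_base.
set T := pinvmx Y *m X.
set f := e *m T.
have rX : \rank X^! = \rank Y^!.
  by rewrite !rank_ortho (rank_gram H).
have [bX [bXu bXX]] := exists_obasis rX.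
have fX : (f <= X)%MS by rewrite /f /T mulmxA submxMl.
have fu : f \is unitarymx.
  apply/unitarymxP; rewrite /f /T mulmxA gram_mul H -gram_mul.
  have eu : e \is unitarymx by apply: schmidt_unitarymx; rewrite rank_leq_col.
  by rewrite mulmxKpV ?eY // (unitarymxP eu).
have fbX : f *m bX^t* = 0.
  apply/orthomx1P; apply: (submx_trans fX); by rewrite orthomx_sym.
have FU : col_mx f bX \is unitarymx by apply: col_unitary.
exists ((schmidt_complete Y)^t* *m col_mx f bX); split.
  apply/unitarymxP; rewrite trmx_mul map_mxM trmxCK mulmxA.
  rewrite -[_ *m col_mx f bX *m _]mulmxA (unitarymxP FU) mulmx1.
  have := mulmxKtV (1%:M : 'M_r) EU (add_rank_ortho Y).
  by rewrite mul1mx.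
rewrite /schmidt_complete -/e -/bY.
have YbY : Y *m bY^t* = 0 by apply/orthomx1P; rewrite orthomx_sym.
have YE : Y *m (col_mx e bY)^t* *m col_mx e bY = Y.
  by rewrite mulmxKtV // add_rank_ortho.
rewrite tr_col_mx map_row_mx mul_mx_row YbY mul_row_col mul0mx addr0 in YE *.
rewrite mulmxA mul_mx_row YbY mul_row_col mul0mx addr0 /f mulmxA YE.
by rewrite /T pinv_gram.
Qed.

End Gen.

Unset Implicit Arguments.

Local Open Scope complex_scope.

Theorem mainTheorem11 (R : realType) (m n N : nat)
  (Psi Xi : 'M[R[i]]_m -> 'M[R[i]]_n)
  (A B C D : 'I_N -> 'M[R[i]]_(n, m)) :
  linear Psi -> linear Xi ->
  hermitian_preserving Psi -> hermitian_preserving Xi ->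
  trace_preserving Psi -> trace_preserving Xi ->
  (forall X : 'M[R[i]]_m,
     Psi X = \sum_(k < N) A k *m X *m adjmx (A k)
             - \sum_(j < N) B j *m X *m adjmx (B j)) ->
  (forall X : 'M[R[i]]_m,
     Xi X = \sum_(i < N) C i *m X *m adjmx (C i)
            - \sum_(l < N) D l *m X *m adjmx (D l)) ->
  (Psi = Xi <->
   exists U : 'M[R[i]]_(N + N),
     unitary_mx U /\
     (forall k : 'I_N,
        A k = \sum_(i < N) U (lshift N k) (lshift N i) *: C i
              + \sum_(j < N) U (lshift N k) (rshift N j) *: B j) /\
     (forall l : 'I_N,
        D l = \sum_(i < N) U (rshift N l) (lshift N i) *: C i
              + \sum_(j < N) U (rshift N l) (rshift N j) *: B j)).
Proof.
move=> _ _ _ _ _ _ HPsi0 HXi0.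
have HPsi X : Psi X = \sum_(k < N) A k *m X *m (A k)^t*
             - \sum_(j < N) B j *m X *m (B j)^t*.
  by rewrite HPsi0; congr (_ - _); apply: eq_bigr => k _; rewrite adjE.
have HXi X : Xi X = \sum_(k < N) C k *m X *m (C k)^t*
             - \sum_(j < N) D j *m X *m (D j)^t*.
  by rewrite HXi0; congr (_ - _); apply: eq_bigr => k _; rewrite adjE.
pose E (a : 'I_(N + N)) := match split a with inl k => A k | inr l => D l end.
pose F (a : 'I_(N + N)) := match split a with inl k => C k | inr l => B l end.
have EL k : E (lshift N k) = A k by rewrite /E (unsplitK (inl _ k)).
have ER k : E (rshift N k) = D k by rewrite /E (unsplitK (inr _ k)).
have FL k : F (lshift N k) = C k by rewrite /F (unsplitK (inl _ k)).
have FR k : F (rshift N k) = B k by rewrite /F (unsplitK (inr _ k)).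
have equiv : Psi = Xi <-> forall X,
    \sum_a E a *m X *m (E a)^t* = \sum_b F b *m X *m (F b)^t*.
  split.
    move=> PX X; rewrite !big_split_ord /=; have := congr1 (fun f => f X) PX; rewrite /= HPsi HXi.
    move/zmod_eq => H.
    rewrite (eq_bigr (fun k => A k *m X *m (A k)^t*)); last by move=> k _; rewrite EL.
    rewrite [X in _ + X = _](eq_bigr (fun k => D k *m X *m (D k)^t*)); last by move=> k _; rewrite ER.
    rewrite [X in _ = X + _](eq_bigr (fun k => C k *m X *m (C k)^t*)); last by move=> k _; rewrite FL.
    rewrite [X in _ = _ + X](eq_bigr (fun k => B k *m X *m (B k)^t*)); last by move=> k _; rewrite FR.
    exact: H.
  move=> H; apply: functional_extensionality => X.
  rewrite HPsi HXi; apply/zmod_eq.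
  have := H X; rewrite !big_split_ord /=.
  rewrite (eq_bigr (fun k => A k *m X *m (A k)^t*)); last by move=> k _; rewrite EL.
  rewrite [X in _ + X = _](eq_bigr (fun k => D k *m X *m (D k)^t*)); last by move=> k _; rewrite ER.
  rewrite [X in _ = X + _](eq_bigr (fun k => C k *m X *m (C k)^t*)); last by move=> k _; rewrite FL.
  by rewrite [X in _ = _ + X](eq_bigr (fun k => B k *m X *m (B k)^t*)); last by move=> k _; rewrite FR.
rewrite equiv; split.
  move=> H.
  pose Xm := \matrix_(x < n * m, a < N + N) mxvec (E a) 0 x.
  pose Ym := \matrix_(x < n * m, a < N + N) mxvec (F a) 0 x.
  have G : Xm *m Xm^t* = Ym *m Ym^t*.
    apply/matrixP => x y; case/mxvec_indexP: x => i p; case/mxvec_indexP: y => j q.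
    have := congr1 (fun M : 'M_n => M i j) (H (delta_mx p q)).
    rewrite !summxE.
    under eq_bigr do rewrite delta_entry.
    under [in RHS]eq_bigr do rewrite delta_entry.
    move=> Hij; rewrite !mxE.
    rewrite (eq_bigr (fun a => E a i p * (E a^t*) q j)); last first.
      by move=> a _; rewrite !mxE !mxvecE.
    rewrite [RHS](eq_bigr (fun a => F a i p * (F a^t*) q j)); last first.
      by move=> a _; rewrite !mxE !mxvecE.
    exact: Hij.
  have [V [VU XV]] := key G.
  have comb a : E a = \sum_b V b a *: F b.
    apply/matrixP => i p.
    have := congr1 (fun M : 'M_(n * m, N + N) => M (mxvec_index i p) a) XV.
    rewrite /= !mxE mxvecE summxE => ->.
    by apply: eq_bigr => b _; rewrite !mxE mxvecE mulrC.
  exists V^T; split.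
    rewrite /unitary_mx !adjE; split.
      by apply/unitarymxP; rewrite trmx_unitary.
    have VTU : V^T \is unitarymx by rewrite trmx_unitary.
    by have := mulmxKtV (1%:M : 'M_(N + N)) VTU erefl; rewrite mul1mx.
  split=> k.
    rewrite -EL comb big_split_ord /=; congr (_ + _); apply: eq_bigr => i _.
      by rewrite FL mxE.
    by rewrite FR mxE.
  rewrite -ER comb big_split_ord /=; congr (_ + _); apply: eq_bigr => i _.
    by rewrite FL mxE.
  by rewrite FR mxE.
move=> [U [[_ UU] [HA HD]]] X.
apply: (@cp_sum _ _ _ _ E F U); first by rewrite -adjE.
move=> a; case: (split_ordP a) => k ->.
  rewrite EL HA big_split_ord /=; congr (_ + _); apply: eq_bigr => i _.
    by rewrite FL.
  by rewrite FR.
rewrite ER HD big_split_ord /=; congr (_ + _); apply: eq_bigr => i _.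
  by rewrite FL.
by rewrite FR.
Qed.
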